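(* Assume the setting in the context. Let $x_i,x_j,x_k\in X$ be distinct, and assume $x_k$ is neither a parent of $x_i$ nor a parent of $x_j$. If there exist $G_1,G_2\in\mathcal G$, $M\subseteq X\setminus\{x_i,x_j,x_k\}$ and $N\subseteq X\setminus\{x_i,x_j\}$ with $x_i-G_1(M\cup\{x_k\})\perp\!\!\!\perp x_j-G_2(N)$, then there exist $G_1',G_2'\in\mathcal G$, $M'\subseteq X\setminus\{x_i,x_j,x_k\}$ and $N'\subseteq X\setminus\{x_i,x_j\}$ with $x_i-G_1'(M')\perp\!\!\!\perp x_j-G_2'(N')$.
   Context: Model: $X$ is a finite set of observed random variables and $U$ a finite set of unobserved random variables; $V=X\cup U$ and $G=(V,E)$ is a DAG on $V$. Each $v_i\in V$ satisfies $v_i=\sum_{x_j\in \mathrm{pa}(v_i)\cap X} f^{(i)}_j(x_j)+\sum_{u_k\in\mathrm{pa}(v_i)\cap U} f^{(i)}_k(u_k)+n_i$, where the $f$'s are nonlinear functions and the external noises $n_i$ are jointly independent. ''Parent'', ''ancestor'', ''path'', ''d-separation'' refer to $G$ (a path has distinct vertices). Causal Faithfulness Condition (CFC): any conditional independence among variables of $V$ that is not entailed by d-separation in $G$ does not hold. $\perp\!\!\!\perp$ denotes statistical independence, $\not\perp\!\!\!\perp$ dependence. Function class: $\mathcal G$ is a class of generalized additive functions: for $G\in\mathcal G$ and a set $M$ of observed variables, $G(M)=\sum_{x_m\in M} g_m(x_m)$ (with $G(\emptyset)=0$). It satisfies: for any $x_i,x_j\in X$, sets $M,N\subseteq X$,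 $G_1,G_2\in\mathcal G$ and external noise $n_k$, if $n_k\not\perp\!\!\!\perp x_i-G_1(M)$ and $n_k\not\perp\!\!\!\perp x_j-G_2(N)$ then $x_i-G_1(M)\not\perp\!\!\!\perp x_j-G_2(N)$. Definitions, for $X'\subseteq X$ and $x_i,x_j\in X'$: an unobserved causal path (UCP) from $x_i$ to $x_j$ w.r.t. $X'$ is a directed path $x_i\to\cdots\to v_k\to x_j$ in $G$ with $v_k\notin X'$; an unobserved backdoor path (UBP) between $x_i$ and $x_j$ w.r.t. $X'$ is a path $x_i\leftarrow v_k\leftarrow\cdots\leftarrow v\to\cdots\to v_l\to x_j$ with $v_k,v_l\notin X'$ (allowing $v=v_k$, $v=v_l$, or $v=v_k=v_l$; $v$ may be in $X'$). ''UBP/UCP between $x_i$ and $x_j$'' means a UBP or a UCP in either direction. $x_j$ is a visible parent of $x_i$ w.r.t. $X'$ if $x_j$ is a parent of $x_i$ and there is no UBP/UCP between them w.r.t. $X'$; $(x_i,x_j)$ is a visible non-edge w.r.t. $X'$ if there is no edge between them and no UBP/UCP between them w.r.t. $X'$; $(x_i,x_j)$ is invisible w.r.t. $X'$ if there is a UBP/UCP between them w.r.t. $X'$. When $X'$ is omitted, $X'=X$. Standing facts (taken as known), for $X'\subseteq X$ and distinct $x_i,x_j\in X'$: (F1) $x_j$ is a visible parent of $x_i$ w.r.t. $X'$ iff [for all $G_1,G_2\in\mathcal G$, $M\subseteq X'\setminus\{x_i,x_j\}$, $N\subseteq X'\setminus\{x_j\}$: $x_i-G_1(M)\not\perp\!\!\!\perp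 x_j-G_2(N)$] and [there exist $G_1,G_2\in\mathcal G$, $M\subseteq X'\setminus\{x_i\}$, $N\subseteq X'\setminus\{x_i,x_j\}$ with $x_i-G_1(M)\perp\!\!\!\perp x_j-G_2(N)$]. (F2) $(x_i,x_j)$ is a visible non-edge w.r.t. $X'$ iff there exist $G_1,G_2\in\mathcal G$ and $M,N\subseteq X'\setminus\{x_i,x_j\}$ with $x_i-G_1(M)\perp\!\!\!\perp x_j-G_2(N)$. (F3) $(x_i,x_j)$ is invisible w.r.t. $X'$ iff for all $M\subseteq X'\setminus\{x_i\}$, $N\subseteq X'\setminus\{x_j\}$, $G_1,G_2\in\mathcal G$: $x_i-G_1(M)\not\perp\!\!\!\perp x_j-G_2(N)$. *)

(* Defs.v *)
From HB Require Import structures.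
From mathcomp Require Import all_boot all_order all_algebra.
From mathcomp Require Import all_classical all_reals all_analysis.
Set Implicit Arguments. Unset Strict Implicit. Unset Printing Implicit Defensive.
Import Order.TTheory GRing.Theory Num.Theory.
Local Open Scope classical_set_scope.
Local Open Scope ring_scope.

Section Defs.
Variables (V : finType) (E : rel V).
(* E u v  <->  u -> v is an edge of the DAG G = (V, E) *)

Definition acyclic_graph : Prop := forall u v, E u v -> ~ connect E v u.

Definition adj (u v : V) : bool := E u v || E v u.

Definition blocked (s : seq V) (Z : {set V}) : Prop :=
  exists (s1 s2 : seq V) (a v b : V),
    s = s1 ++ [:: a; v; b] ++ s2 /\
    ( (~~ (E a v && E b v) /\ v \in Z) \/
      (E a v && E b v /\ forall w, connect E v w -> w \notin Z) ).

Definition dsep (A B Z : {set V}) : Prop :=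
  forall (a b : V) (p : seq V), a \in A -> b \in B ->
    uniq (a :: p) -> path adj a p -> last a p = b -> blocked (a :: p) Z.

Definition UCP (X' : {set V}) (xi xj : V) : Prop :=
  exists (p : seq V) (vk : V),
    uniq (xi :: p ++ [:: vk; xj]) /\ path E xi (p ++ [:: vk; xj]) /\
    vk \notin X'.

(* unobserved backdoor path between xi and xj w.r.t. X' :
   xi <- vk <- ... <- v -> ... -> vl -> xj, distinct vertices,
   vk, vl \notin X' (v = vk, v = vl, v = vk = vl allowed) ;
   here v :: p1 is the directed path v -> ... -> vk and
   v :: p2 the directed path v -> ... -> vl *)
Definition UBP (X' : {set V}) (xi xj : V) : Prop :=
  exists (v : V) (p1 p2 : seq V),
    uniq (xi :: xj :: v :: p1 ++ p2) /\
    path E v p1 /\ path E v p2 /\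
    E (last v p1) xi /\ E (last v p2) xj /\
    last v p1 \notin X' /\ last v p2 \notin X'.

Definition UBP_UCP_between (X' : {set V}) (xi xj : V) : Prop :=
  UBP X' xi xj \/ UBP X' xj xi \/ UCP X' xi xj \/ UCP X' xj xi.

Definition visible_parent (X' : {set V}) (xi xj : V) : Prop :=
  E xj xi /\ ~ UBP_UCP_between X' xi xj.

Definition visible_nonedge (X' : {set V}) (xi xj : V) : Prop :=
  ~~ adj xi xj /\ ~ UBP_UCP_between X' xi xj.

Definition invisible (X' : {set V}) (xi xj : V) : Prop :=
  UBP_UCP_between X' xi xj.

Variables (d : measure_display) (T : measurableType d) (R : realType)
          (P : probability T R).

Definition indep (Y Z : T -> R) : Prop :=
  forall A B : set R, measurable A -> measurable B ->
    P (Y @^-1` A `&` Z @^-1` B) = (P (Y @^-1` A) * P (Z @^-1` B))%E.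

Definition mutually_indep (n : V -> T -> R) : Prop :=
  forall B : V -> set R, (forall v, measurable (B v)) ->
    P (\bigcap_v (n v @^-1` B v)) = \big[*%E/1%E]_(v : V) P (n v @^-1` B v).

Definition sigmaS (x : V -> T -> R) (S : {set V}) : set (set T) :=
  <<s [set A | exists v, v \in S /\
                 exists B : set R, measurable B /\ A = x v @^-1` B] >>.

(* conditional independence (x_A  indep  x_B | x_C): for every event a of
   sigma(x_A), a version of P(a | sigma(x_B, x_C)) is sigma(x_C)-measurable *)
Definition cond_indep (x : V -> T -> R) (A B C : {set V}) : Prop :=
  forall a, sigmaS x A a ->
    exists phi : T -> R,
      (forall w, 0 <= phi w <= 1) /\
      (forall D : set R, measurable D -> sigmaS x C (phi @^-1` D)) /\
      (forall b c, sigmaS x B b -> sigmaS x C c ->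
         P (a `&` b `&` c) = (\int[P]_(w in b `&` c) (phi w)%:E)%E).

Definition CFC (x : V -> T -> R) : Prop :=
  forall A B C : {set V},
    A :&: B = finset.set0 -> A :&: C = finset.set0 -> B :&: C = finset.set0 ->
    cond_indep x A B C -> dsep A B C.

Definition ANM_model (x n : V -> T -> R) (f : V -> V -> R -> R) : Prop :=
  acyclic_graph /\
  (forall v, measurable_fun setT (n v)) /\
  mutually_indep n /\
  (forall i j, measurable_fun setT (f i j)) /\
  (forall i j, E j i -> ~ exists a b : R, forall r, f i j r = a * r + b) /\
  (forall i w, x i w = \sum_(j | E j i) f i j (x j w) + n i w) /\
  CFC x.

Definition resid (x : V -> T -> R) (g : V -> R -> R) (xi : V) (M : {set V})
  : T -> R := fun w => x xi w - \sum_(m in M) g m (x m w).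

Definition class_property (obs : {set V}) (x n : V -> T -> R)
  (Gc : set (V -> R -> R)) : Prop :=
  forall (xi xj : V) (M N : {set V}) (g1 g2 : V -> R -> R) (k : V),
    xi \in obs -> xj \in obs -> M \subset obs -> N \subset obs ->
    Gc g1 -> Gc g2 ->
    ~ indep (n k) (resid x g1 xi M) -> ~ indep (n k) (resid x g2 xj N) ->
    ~ indep (resid x g1 xi M) (resid x g2 xj N).

(* standing facts (F1), (F2), (F3) *)
Definition standing_facts (obs : {set V}) (x : V -> T -> R)
  (Gc : set (V -> R -> R)) : Prop :=
  forall (X' : {set V}) (xi xj : V),
    X' \subset obs -> xi \in X' -> xj \in X' -> xi != xj ->
    [/\ visible_parent X' xi xj <->
          ((forall g1 g2 (M N : {set V}), Gc g1 -> Gc g2 ->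
              M \subset X' :\: [set xi; xj] -> N \subset X' :\ xj ->
              ~ indep (resid x g1 xi M) (resid x g2 xj N)) /\
           (exists g1 g2 (M N : {set V}), [/\ Gc g1, Gc g2,
              M \subset X' :\ xi, N \subset X' :\: [set xi; xj] &
              indep (resid x g1 xi M) (resid x g2 xj N)])),
        visible_nonedge X' xi xj <->
          (exists g1 g2 (M N : {set V}), [/\ Gc g1, Gc g2,
              M \subset X' :\: [set xi; xj], N \subset X' :\: [set xi; xj] &
              indep (resid x g1 xi M) (resid x g2 xj N)])
      & invisible X' xi xj <->
          (forall g1 g2 (M N : {set V}), Gc g1 -> Gc g2 ->
              M \subset X' :\ xi -> N \subset X' :\ xj ->
              ~ indep (resid x g1 xi M) (resid x g2 xj N))].

End Defs.

(* Main.v *)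
Require Import Defs.
From HB Require Import structures.
From mathcomp Require Import all_boot all_order all_algebra.
From mathcomp Require Import all_classical all_reals all_analysis.
Local Open Scope classical_set_scope.
Local Open Scope ring_scope.


Ltac bfin := repeat match goal with |- context[?a == ?b] => case: (a == b) | |- context[?a \in ?b] => case: (a \in b) end; done.

Lemma indep_sym (d : measure_display) (T : measurableType d) (R : realType)
  (P : probability T R) (Y Z : T -> R) : indep P Y Z -> indep P Z Y.
Proof.
move=> H A B mA mB; rewrite setIC H // muleC //.
Qed.

Lemma between_sym (V : finType) (E : rel V) X a b :
  UBP_UCP_between E X a b -> UBP_UCP_between E X b a.
Proof. rewrite /UBP_UCP_between; tauto. Qed.

Lemma between_restrict (V : finType) (E : rel V) (obs : {set V}) a b k :
  ~~ E k a -> ~~ E k b ->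
  UBP_UCP_between E (obs :\ k) a b -> UBP_UCP_between E obs a b.
Proof.
move=> Ha Hb.
have key : forall u c, ~~ E k c -> E u c -> u \notin obs :\ k -> u \notin obs.
  move=> u c Hc Euc; rewrite !inE negb_and negbK => /orP[/eqP uk|//].
  by subst u; rewrite Euc in Hc.
have ucp : forall c e, ~~ E k e -> UCP E (obs :\ k) c e -> UCP E obs c e.
  move=> c e He [p [vk [U [Pa N]]]]; exists p, vk; split => //; split => //.
  apply: (key _ e He) => //.
  move: Pa; rewrite cat_path /= => /and3P[_ _]; by rewrite andbT.
have ubp : forall c e, ~~ E k c -> ~~ E k e -> UBP E (obs :\ k) c e -> UBP E obs c e.
  move=> c e Hc He [v [p1 [p2 [U [P1 [P2 [E1 [E2 [N1 N2]]]]]]]]].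
  exists v, p1, p2; do 4 (split => //); split => //; split.
  - exact: (key _ c Hc).
  - exact: (key _ e He).
case=> [H|[H|[H|H]]].
- by left; apply: ubp.
- by right; left; apply: ubp.
- by right; right; left; apply: ucp.
- by right; right; right; apply: ucp.
Qed.

Theorem proposition4
  (V : finType) (E : rel V) (obs : {set V})
  (d : measure_display) (T : measurableType d) (R : realType)
  (P : probability T R)
  (x n : V -> T -> R) (f : V -> V -> R -> R) (Gc : set (V -> R -> R))
  (Hmodel : ANM_model E P x n f)
  (Hclass : class_property P obs x n Gc)
  (Hfacts : standing_facts E P obs x Gc)
  (xi xj xk : V)
  (Hi : xi \in obs) (Hj : xj \in obs) (Hk : xk \in obs)
  (Hij : xi != xj) (Hik : xi != xk) (Hjk : xj != xk)
  (Hki : ~~ E xk xi) (Hkj : ~~ E xk xj) :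
  (exists (g1 g2 : V -> R -> R) (M N : {set V}),
     [/\ Gc g1, Gc g2,
         M \subset obs :\: [set xi; xj; xk],
         N \subset obs :\: [set xi; xj] &
         indep P (resid x g1 xi (xk |: M)) (resid x g2 xj N)]) ->
  exists (g1' g2' : V -> R -> R) (M' N' : {set V}),
     [/\ Gc g1', Gc g2',
         M' \subset obs :\: [set xi; xj; xk],
         N' \subset obs :\: [set xi; xj] &
         indep P (resid x g1' xi M') (resid x g2' xj N')].
Proof.
move=> [g1 [g2 [M [N [G1 G2 HM HN Hind]]]]].
have Xsub : obs \subset obs by apply: subxx.
have HM' : (xk |: M) \subset obs :\ xi.
  apply/fintype.subsetP=> y; rewrite !inE => /orP[/eqP->|yM]; first by rewrite eq_sym (negbTE Hik) Hk.
  move/fintype.subsetP: HM => /(_ y yM); rewrite !inE; bfin.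
have HM2 : (xk |: M) \subset obs :\: [set xi; xj].
  apply/fintype.subsetP=> y; rewrite !inE => /orP[/eqP->|yM]; first by rewrite !(eq_sym xk) (negbTE Hik) (negbTE Hjk) Hk.
  move/fintype.subsetP: HM => /(_ y yM); rewrite !inE; bfin.
have HN' : N \subset obs :\ xj.
  apply/fintype.subsetP=> y yN; move/fintype.subsetP: HN => /(_ y yN); rewrite !inE; bfin.
have HN2 : N \subset obs :\: [set xj; xi].
  apply/fintype.subsetP=> y yN; move/fintype.subsetP: HN => /(_ y yN); rewrite !inE; bfin.
have HM3 : (xk |: M) \subset obs :\ xi by [].
have [_ _ F3] := Hfacts obs xi xj Xsub Hi Hj Hij.
have notinv : ~ UBP_UCP_between E obs xi xj.
  by move=> /F3 H; exact: (H _ _ _ _ G1 G2 HM' HN' Hind).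
have nji : ~~ E xj xi.
  apply/negP=> Eji.
  have [[F1 _] _ _] := Hfacts obs xi xj Xsub Hi Hj Hij.
  have [H _] := F1 (conj Eji notinv).
  exact: (H _ _ _ _ G1 G2 HM2 HN' Hind).
have Hji : xj != xi by rewrite eq_sym.
have nij : ~~ E xi xj.
  apply/negP=> Eij.
  have [[F1 _] _ _] := Hfacts obs xj xi Xsub Hj Hi Hji.
  have nb : ~ UBP_UCP_between E obs xj xi by move/between_sym.
  have [H _] := F1 (conj Eij nb).
  exact: (H _ _ _ _ G2 G1 HN2 HM3 (indep_sym _ _ _ _ _ _ Hind)).
have Xsub' : obs :\ xk \subset obs by apply/fintype.subsetP=> y; rewrite inE => /andP[].
have Hi' : xi \in obs :\ xk by rewrite !inE Hik Hi.
have Hj' : xj \in obs :\ xk by rewrite !inE Hjk Hj.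
have [_ [F2 _] _] := Hfacts (obs :\ xk) xi xj Xsub' Hi' Hj' Hij.
have vne : visible_nonedge E (obs :\ xk) xi xj.
  split; first by rewrite /adj negb_or nij nji.
  by move/(@between_restrict _ E obs xi xj xk Hki Hkj).
have [h1 [h2 [M' [N' [H1 H2 HM'' HN'' Hind']]]]] := F2 vne.
exists h1, h2, M', N'; split => //.
- apply/fintype.subsetP=> y yM; move/fintype.subsetP: HM'' => /(_ y yM); rewrite !inE.
  bfin.
- apply/fintype.subsetP=> y yN; move/fintype.subsetP: HN'' => /(_ y yN); rewrite !inE.
  bfin.
Qed.
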